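(* Consider the single-sensor system $x_{k+1}=Ax_k+w_k$, $y_k=Cx_k+v_k$ ($w_k,v_k$ independent zero-mean Gaussian with covariances $Q$, $R$), $(A,C)$ detectable, $(A,Q^{1/2})$ stabilizable, with local Kalman filter in steady state with filtered error covariance $\bar P$. Let $f(X)=AXA^T+Q$, $\mathcal{S}=\{f^n(\bar P):n\ge0\}$, $\lambda\in(0,1]$, $E\ge0$, $\beta\in(0,1)$. (i) (Finite horizon.) For $K\ge1$ define $J_{K+1}\equiv0$ and $J_k(P)=\min\{\beta\,\mathrm{tr}f(P)+J_{k+1}(f(P)),\ \beta[\lambda\mathrm{tr}\bar P+(1-\lambda)\mathrm{tr}f(P)]+(1-\beta)E+\lambda J_{k+1}(\bar P)+(1-\lambda)J_{k+1}(f(P))\}$ for $P\in\mathcal{S}$, and let the optimal decision $\nu_k^*(P)\in\{0,1\}$ be $0$ if the first term attains the minimum and $1$ if the second does. Then there exist thresholds $P^{th}_{k-1|k-1}$, $k=1,\dots,K$, such that $\nu_k^*=0$ if $P_{k-1|k-1}<P^{th}_{k-1|k-1}$ and $\nu_k^*=1$ if $P_{k-1|k-1}\ge P^{th}_{k-1|k-1}$, for $P_{k-1|k-1}\in\mathcal{S}$; the thresholds may be infinite (meaning $\nu_k^*=0$ for all $P_{k-1|k-1}\in\mathcal{S}$) when $A$ is stable. (ii) (Infinite horizon.) Let $(\rho,h)$ be the solution of the average-cost Bellman equation $\rho+h(P)=\min\{\beta\,\mathrm{tr}f(P)+h(f(P)),\ \beta[\lambda\mathrm{tr}\bar P+(1-\lambda)\mathrm{tr}f(P)]+(1-\beta)E+\lambda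 h(\bar P)+(1-\lambda)h(f(P))\}$ on $\mathcal{S}$ obtained as the limit of relative value iteration, and let $\nu^*(P)$ be $0$ or $1$ according to which term attains the minimum. Then the optimal policy is of the form $\nu_k^*=0$ if $P_{k-1|k-1}<P^{th}$ and $\nu_k^*=1$ if $P_{k-1|k-1}\ge P^{th}$, for some constant threshold $P^{th}$, which may be infinite when $A$ is stable.
   Context: For symmetric matrices, $X\le Y$ means $Y-X$ is positive semidefinite (by the paper's results $\mathcal{S}$ is totally ordered by this relation), and $X<Y$ means $X\le Y$, $X\ne Y$ within $\mathcal{S}$. $\nu_k=1$ means the sensor transmits its local state estimate at time $k$ over an i.i.d. channel with success probability $\lambda$, at cost $E$; the remote error covariance becomes $\bar P$ on successful reception and $f(P_{k-1|k-1})$ otherwise. A matrix is stable if all eigenvalues have modulus less than one. *)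

(* Defs.v *)
From HB Require Import structures.
From mathcomp Require Import all_boot all_order all_algebra.
From mathcomp Require Import all_classical all_reals all_analysis.
From mathcomp Require Import complex.
Set Implicit Arguments. Unset Strict Implicit. Unset Printing Implicit Defensive.
Import Order.TTheory GRing.Theory Num.Theory.
Local Open Scope ring_scope.

Section Defs.
Variable R : realType.

Definition cmx (p q : nat) (M : 'M[R]_(p, q)) : 'M[R[i]]_(p, q) :=
  map_mx (fun x : R => Complex x 0) M.

Definition stable (n : nat) (A : 'M[R]_n) : Prop :=
  forall z : R[i], eigenvalue (cmx A) z -> `|z| < 1.

Definition psd (n : nat) (M : 'M[R]_n) : Prop :=
  M^T = M /\ forall v : 'rV[R]_n, 0 <= (v *m M *m v^T) ord0 ord0.
Definition pd (n : nat) (M : 'M[R]_n) : Prop :=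
  M^T = M /\ forall v : 'rV[R]_n, v != 0 -> 0 < (v *m M *m v^T) ord0 ord0.

Definition loew_le (n : nat) (X Y : 'M[R]_n) : Prop := psd (Y - X).
Definition loew_lt (n : nat) (X Y : 'M[R]_n) : Prop := loew_le X Y /\ X <> Y.

Definition detectable (n m : nat) (A : 'M[R]_n) (C : 'M[R]_(m, n)) : Prop :=
  exists L : 'M[R]_(n, m), stable (A - L *m C).
Definition stabilizable (n m : nat) (A : 'M[R]_n) (B : 'M[R]_(n, m)) : Prop :=
  exists L : 'M[R]_(m, n), stable (A + B *m L).

Definition lyap (n : nat) (A Q : 'M[R]_n) (X : 'M[R]_n) : 'M[R]_n :=
  A *m X *m A^T + Q.

Definition kf_step (n m : nat) (A Q : 'M[R]_n) (C : 'M[R]_(m, n)) (Rv : 'M[R]_m)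
  (P : 'M[R]_n) : 'M[R]_n :=
  let Pm := lyap A Q P in
  Pm - Pm *m C^T *m invmx (C *m Pm *m C^T + Rv) *m C *m Pm.

Definition inS (n : nat) (A Q Pbar : 'M[R]_n) (P : 'M[R]_n) : Prop :=
  exists k : nat, P = iter k (lyap A Q) Pbar.

(* the two terms of the Bellman operator, for a value function h:
   c0 : do not transmit (nu = 0), c1 : transmit (nu = 1) *)
Definition cost0 (n : nat) (A Q : 'M[R]_n) (beta : R) (h : 'M[R]_n -> R)
  (P : 'M[R]_n) : R :=
  beta * \tr (lyap A Q P) + h (lyap A Q P).
Definition cost1 (n : nat) (A Q Pbar : 'M[R]_n) (lam E beta : R)
  (h : 'M[R]_n -> R) (P : 'M[R]_n) : R :=
  beta * (lam * \tr Pbar + (1 - lam) * \tr (lyap A Q P)) + (1 - beta) * E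
  + lam * h Pbar + (1 - lam) * h (lyap A Q P).

Definition bellman (n : nat) (A Q Pbar : 'M[R]_n) (lam E beta : R)
  (h : 'M[R]_n -> R) (P : 'M[R]_n) : R :=
  Num.min (cost0 A Q beta h P) (cost1 A Q Pbar lam E beta h P).

(* finite horizon value functions: J K k = J_k, with J_{K+1} = 0,
   J_k = T J_{k+1}  (defined for k <= K+1) *)
Definition Jfin (n : nat) (A Q Pbar : 'M[R]_n) (lam E beta : R) (K k : nat) :
  'M[R]_n -> R :=
  iter (K.+1 - k) (bellman A Q Pbar lam E beta) (fun _ => 0).

Fixpoint rvi (n : nat) (A Q Pbar : 'M[R]_n) (lam E beta : R) (s0 : 'M[R]_n)
  (m : nat) : 'M[R]_n -> R :=
  match m with
  | 0 => fun _ => 0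
  | m'.+1 => fun P =>
      bellman A Q Pbar lam E beta (rvi A Q Pbar lam E beta s0 m') P
      - bellman A Q Pbar lam E beta (rvi A Q Pbar lam E beta s0 m') s0
  end.

(* The decision rule "nu(P) optimal := 0 if c0 attains the min, 1 if c1 does"
   is of threshold type with threshold T:
   - T = Some Tth : Tth in S, and for P in S, P < Tth -> nu = 0 is optimal
     (c0 <= c1), and P >= Tth -> nu = 1 is optimal (c1 <= c0);
   - T = None (infinite threshold): nu = 0 is optimal on all of S; this can only
     happen when A is stable. *)
Definition threshold_rule (n : nat) (A Q Pbar : 'M[R]_n)
  (c0 c1 : 'M[R]_n -> R) (T : option 'M[R]_n) : Prop :=
  match T with
  | Some Tth => inS A Q Pbar Tth /\
      forall P, inS A Q Pbar P ->
        (loew_lt P Tth -> c0 P <= c1 P) /\ (loew_le Tth P -> c1 P <= c0 P)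
  | None => stable A /\ forall P, inS A Q Pbar P -> c0 P <= c1 P
  end.

End Defs.

(* Main.v *)
Set Warnings "-all".
Require Import Defs.
From HB Require Import structures.
From mathcomp Require Import all_boot all_order all_algebra.
From mathcomp Require Import all_classical all_reals all_analysis.
From mathcomp Require Import ring lra complex.
Set Implicit Arguments. Unset Strict Implicit. Unset Printing Implicit Defensive.
Import Order.TTheory GRing.Theory Num.Theory numFieldNormedType.Exports.
Local Open Scope ring_scope.

Section Aux.
Variable R : realType.

Definition qf (n : nat) (M : 'M[R]_n) (u v : 'rV[R]_n) : R := (u *m M *m v^T) 0 0.

Lemma qfDl n (M : 'M[R]_n) u1 u2 v : qf M (u1 + u2) v = qf M u1 v + qf M u2 v.
Proof. by rewrite /qf !mulmxDl mxE. Qed.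
Lemma qfZl n (M : 'M[R]_n) k u v : qf M (k *: u) v = k * qf M u v.
Proof. by rewrite /qf -!scalemxAl mxE. Qed.
Lemma qfDr n (M : 'M[R]_n) u v1 v2 : qf M u (v1 + v2) = qf M u v1 + qf M u v2.
Proof. by rewrite /qf linearD /= mulmxDr mxE. Qed.
Lemma qfZr n (M : 'M[R]_n) k u v : qf M u (k *: v) = k * qf M u v.
Proof. by rewrite /qf linearZ /= -scalemxAr mxE. Qed.
Lemma qf_rot n (P : 'M[R]_n) (a b : 'rV_n) x y :
 qf P b a = qf P a b ->
 qf P (x*:a - y*:b) (x*:a - y*:b) + qf P (y*:a + x*:b) (y*:a + x*:b) =
   (x^+2+y^+2) * (qf P a a + qf P b b).
Proof.
move=> hs; rewrite -!scaleNr !qfDl !qfDr !qfZl !qfZr hs. ring.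
Qed.
Lemma qfN n (M : 'M[R]_n) u v : qf M (- u) v = - qf M u v.
Proof. by rewrite -scaleN1r qfZl mulN1r. Qed.
Lemma qfNr n (M : 'M[R]_n) u v : qf M u (- v) = - qf M u v.
Proof. by rewrite -scaleN1r qfZr mulN1r. Qed.
Lemma qfMD n (M1 M2 : 'M[R]_n) u v : qf (M1 + M2) u v = qf M1 u v + qf M2 u v.
Proof. by rewrite /qf mulmxDr mulmxDl mxE. Qed.
Lemma qfMN n (M : 'M[R]_n) u v : qf (- M) u v = - qf M u v.
Proof. by rewrite /qf mulmxN mulNmx mxE. Qed.
Lemma qf_sym n (M : 'M[R]_n) u v : M^T = M -> qf M u v = qf M v u.
Proof.
move=> sM; rewrite /qf -[in LHS](trmxK (u *m M *m v^T)) mxE.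
by rewrite !trmx_mul trmxK sM mulmxA.
Qed.
Lemma qf_delta n (M : 'M[R]_n) i j : qf M (delta_mx 0 i) (delta_mx 0 j) = M i j.
Proof.
by rewrite /qf -rowE trmx_delta -colE !mxE.
Qed.
Lemma qf_cong n p (A : 'M[R]_(n, p)) D u v : qf (A *m D *m A^T) u v = qf D (u *m A) (v *m A).
Proof. by rewrite /qf trmx_mul !mulmxA. Qed.

Lemma psd_sym n (M : 'M[R]_n) : psd M -> M^T = M. Proof. by case. Qed.
Lemma psd_qf n (M : 'M[R]_n) v : psd M -> 0 <= qf M v v. Proof. by case=> _; apply. Qed.

Lemma psdD n (X Y : 'M[R]_n) : psd X -> psd Y -> psd (X + Y).
Proof.
move=> [sX qX] [sY qY]; split; first by rewrite linearD /= sX sY.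
by move=> v; have := qfMD X Y v v; rewrite /qf => ->; apply: addr_ge0.
Qed.

Lemma psd_cong n p (A : 'M[R]_(n, p)) D : psd D -> psd (A *m D *m A^T).
Proof.
move=> [sD qD]; split; first by rewrite !trmx_mul trmxK sD mulmxA.
by move=> v; have := qf_cong A D v v; rewrite /qf => ->.
Qed.

Lemma psd0 n : psd (0 : 'M[R]_n).
Proof. by split; [rewrite trmx0 | move=> v; rewrite mulmx0 mul0mx mxE]. Qed.

Lemma psd_diag n (M : 'M[R]_n) i : psd M -> 0 <= M i i.
Proof. by move=> pM; rewrite -qf_delta; apply: psd_qf. Qed.

Lemma psd_tr n (M : 'M[R]_n) : psd M -> 0 <= \tr M.
Proof. by move=> pM; rewrite /mxtrace sumr_ge0 // => i _; apply: psd_diag. Qed.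

Lemma psd_diag_le_tr n (M : 'M[R]_n) i : psd M -> M i i <= \tr M.
Proof.
move=> pM; rewrite /mxtrace (bigD1 i) //= lerDl sumr_ge0 // => j _.
exact: psd_diag.
Qed.

Lemma loew_refl n (X : 'M[R]_n) : loew_le X X.
Proof. by rewrite /loew_le subrr; apply: psd0. Qed.

Lemma loew_trans n (X Y Z : 'M[R]_n) : loew_le X Y -> loew_le Y Z -> loew_le X Z.
Proof.
rewrite /loew_le => h1 h2; have := psdD h2 h1.
by rewrite addrA subrK.
Qed.

Lemma loew_tr n (X Y : 'M[R]_n) : loew_le X Y -> \tr X <= \tr Y.
Proof. by move=> /psd_tr; rewrite linearB subr_ge0. Qed.

Lemma psd_antisym n (D : 'M[R]_n) : psd D -> psd (- D) -> D = 0.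
Proof.
move=> pD pN.
have q0 : forall v, qf D v v = 0.
  move=> v; apply/eqP; rewrite eq_le psd_qf // andbT.
  by have := psd_qf v pN; rewrite qfMN oppr_ge0.
have sD := psd_sym pD.
apply/matrixP => i j; rewrite mxE.
have := q0 (delta_mx 0 i + delta_mx 0 j).
rewrite qfDl !qfDr !q0 !qf_delta add0r addr0.
have -> : D j i = D i j by rewrite -[in RHS]sD mxE.
move=> h; lra.
Qed.

Lemma loew_antisym n (X Y : 'M[R]_n) : loew_le X Y -> loew_le Y X -> X = Y.
Proof.
rewrite /loew_le => h1 h2; apply/eqP; rewrite eq_sym -subr_eq0; apply/eqP.
by apply: psd_antisym => //; rewrite opprB.
Qed.

Lemma psd_entry n (M : 'M[R]_n) i j : psd M -> `|M i j| <= \tr M.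
Proof.
move=> pM; have sM := psd_sym pM.
have hp := psd_qf (delta_mx 0 i + delta_mx 0 j) pM.
have hm := psd_qf (delta_mx 0 i - delta_mx 0 j) pM.
have eji : M j i = M i j by rewrite -[in RHS]sM mxE.
rewrite qfDl !qfDr !qf_delta eji in hp.
rewrite qfDl !qfDr !(qfN, qfNr) !qf_delta opprK eji in hm.
have ti := psd_diag_le_tr i pM; have tj := psd_diag_le_tr j pM.
have := psd_diag i pM; have := psd_diag j pM.
rewrite ler_norml; move=> *; apply/andP; split; lra.
Qed.

End Aux.

Section Aux2.
Variable R : realType.

Lemma lyapB n (A Q P P' : 'M[R]_n) :
  lyap A Q P' - lyap A Q P = A *m (P' - P) *m A^T.
Proof. by rewrite /lyap mulmxBr mulmxBl opprD addrACA subrr addr0. Qed.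

Lemma lyap_mono n (A Q P P' : 'M[R]_n) :
  loew_le P P' -> loew_le (lyap A Q P) (lyap A Q P').
Proof. by rewrite /loew_le lyapB; apply: psd_cong. Qed.

Lemma psd_lyap n (A Q P : 'M[R]_n) : psd P -> psd Q -> psd (lyap A Q P).
Proof. by move=> pP pQ; apply: psdD => //; apply: psd_cong. Qed.

Lemma pd_psd n (M : 'M[R]_n) : pd M -> psd M.
Proof.
move=> [sM qM]; split=> // v; have [->|v0] := eqVneq v 0.
  by rewrite !mul0mx mxE.
exact/ltW/qM.
Qed.

Lemma kf_le n m (A Q : 'M[R]_n) (C : 'M[R]_(m, n)) (Rv : 'M[R]_m) (Pbar : 'M[R]_n) :
  psd Q -> pd Rv -> psd Pbar -> kf_step A Q C Rv Pbar = Pbar ->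
  loew_le Pbar (lyap A Q Pbar).
Proof.
move=> pQ pR pP kf.
set Pm := lyap A Q Pbar.
have pPm : psd Pm by apply: psd_lyap.
have sPm := psd_sym pPm.
set M := C *m Pm *m C^T + Rv.
have pM1 : psd (C *m Pm *m C^T) by apply: psd_cong.
have sM : M^T = M by rewrite /M linearD /= (psd_sym pM1) (psd_sym (pd_psd pR)).
have qM : forall v, v != 0 -> 0 < qf M v v.
  move=> v v0; rewrite /M qfMD; apply: ltr_wpDl; first exact: psd_qf.
  by case: pR => _; apply.
have uM : M \in unitmx.
  rewrite unitmxE unitfE; apply/negP => /det0P [v v0 vM].
  by have := qM v v0; rewrite /qf vM mul0mx mxE ltxx.
set N := invmx M.
have sN : N^T = N by rewrite /N trmx_inv sM.
set X := Pm *m C^T.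
have XT : X^T = C *m Pm by rewrite /X trmx_mul trmxK sPm.
have E : Pm - Pbar = X *m N *m X^T.
  rewrite -{1}kf /kf_step -/Pm -/M -/N opprB addrC subrK.
  by rewrite XT /X !mulmxA.
clearbody X. rewrite /loew_le -/Pm E /psd; split.
  by rewrite !trmx_mul trmxK sN mulmxA.
move=> v; have -> : v *m (X *m N *m X^T) *m v^T = (v *m X) *m N *m (v *m X)^T.
  by rewrite trmx_mul !mulmxA.
set u := v *m X.
set y := u *m N.
have hu : u = y *m M by rewrite /y -mulmxA mulVmx // mulmx1.
rewrite [in X in _ *m X]hu trmx_mul sM mulmxA.
exact: (psd_qf y (psdD pM1 (pd_psd pR))).
Qed.
End Aux2.

Section Aux3.
Variable R : realType.

Lemma qf_expand n (P : 'M[R]_n) (a : 'rV[R]_n) :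
  qf P a a = \sum_j \sum_i a 0 i * P i j * a 0 j.
Proof.
rewrite /qf mxE; apply: eq_bigr => j _; rewrite !mxE mulr_suml.
by apply: eq_bigr => i _.
Qed.

Lemma qf_bound n (P : 'M[R]_n) (a : 'rV[R]_n) :
  psd P -> qf P a a <= (\sum_i `|a 0 i|) ^+ 2 * \tr P.
Proof.
move=> pP.
have -> : (\sum_i `|a 0 i|) ^+ 2 * \tr P =
          \sum_j \sum_i `|a 0 i| * \tr P * `|a 0 j|.
  rewrite expr2 mulrAC mulr_sumr; apply: eq_bigr => j _.
  by rewrite !mulr_suml.
rewrite qf_expand; apply: ler_sum => j _; apply: ler_sum => i _.
apply: (le_trans (ler_norm _)); rewrite !normrM.
by move: (psd_entry i j pP) => h; apply: ler_wpM2r => //; apply: ler_wpM2l.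
Qed.

End Aux3.

Section Cplx.
Variable R : realType.

Lemma cmxE p q (M : 'M[R]_(p, q)) : cmx M = map_mx (real_complex R) M.
Proof. by apply/matrixP => i j; rewrite !mxE. Qed.

Lemma cmxD p q (M1 M2 : 'M[R]_(p, q)) : cmx (M1 + M2) = cmx M1 + cmx M2.
Proof. by rewrite !cmxE map_mxD. Qed.

Lemma cmxM p q r (M1 : 'M[R]_(p, q)) (M2 : 'M[R]_(q, r)) :
  cmx (M1 *m M2) = cmx M1 *m cmx M2.
Proof. by rewrite !cmxE map_mxM. Qed.

Lemma Re_sum (I : Type) (r : seq I) (P : pred I) (F : I -> R[i]) :
  complex.Re (\sum_(i <- r | P i) F i) = \sum_(i <- r | P i) complex.Re (F i).
Proof.
apply: (big_rec2 (fun x y => complex.Re x = y)) => // i y1 y2 _ <-.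
by case: (F i); case: y1.
Qed.

Lemma Im_sum (I : Type) (r : seq I) (P : pred I) (F : I -> R[i]) :
  complex.Im (\sum_(i <- r | P i) F i) = \sum_(i <- r | P i) complex.Im (F i).
Proof.
apply: (big_rec2 (fun x y => complex.Im x = y)) => // i y1 y2 _ <-.
by case: (F i); case: y1.
Qed.

Lemma reM n p (w : 'rV[R[i]]_n) (M : 'M[R]_(n, p)) :
  map_mx (@complex.Re R) (w *m cmx M) = map_mx (@complex.Re R) w *m M.
Proof.
apply/matrixP => i j; rewrite !mxE Re_sum; apply: eq_bigr => k _.
by rewrite !mxE; case: (w i k) => u v /=; rewrite mulr0 subr0.
Qed.

Lemma imM n p (w : 'rV[R[i]]_n) (M : 'M[R]_(n, p)) :
  map_mx (@complex.Im R) (w *m cmx M) = map_mx (@complex.Im R) w *m M.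
Proof.
apply/matrixP => i j; rewrite !mxE Im_sum; apply: eq_bigr => k _.
by rewrite !mxE; case: (w i k) => u v /=; rewrite mulr0 add0r.
Qed.

End Cplx.

Section Unst.
Variable R : realType.

Lemma qf1 n (u : 'rV[R]_n) : qf 1%:M u u = \sum_j u 0 j ^+ 2.
Proof. by rewrite /qf mulmx1 mxE; apply: eq_bigr => j _; rewrite mxE expr2. Qed.

Lemma qf1_gt0 n (u : 'rV[R]_n) : u != 0 -> 0 < qf 1%:M u u.
Proof.
move=> u0; rewrite qf1 lt_def sumr_ge0 ?andbT; last by move=> j _; apply: sqr_ge0.
apply/negP => /eqP /psumr_eq0P h; move/eqP: u0; apply; apply/matrixP => i j.
rewrite (ord1 i) mxE; apply/eqP; rewrite -sqrf_eq0; apply/eqP; apply: h => //.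
by move=> k _; apply: sqr_ge0.
Qed.

Lemma psd1 n : psd (1%:M : 'M[R]_n).
Proof.
split; first by rewrite trmx1.
move=> v; have := qf1 v; rewrite /qf => ->; apply: sumr_ge0 => j _; apply: sqr_ge0.
Qed.

Lemma eig_real n (A : 'M[R]_n) (Qh : 'M[R]_n) (z : R[i]) (w : 'rV[R[i]]_n) :
  w *m cmx A = z *: w -> exists a b : 'rV[R]_n,
  [/\ a *m A = complex.Re z *: a - complex.Im z *: b,
       b *m A = complex.Im z *: a + complex.Re z *: b &
       (a *m Qh = 0 -> b *m Qh = 0 -> w *m cmx Qh = 0)].
Proof.
move=> hw; exists (map_mx (@complex.Re R) w), (map_mx (@complex.Im R) w); split.
- rewrite -reM hw; apply/matrixP => i j; rewrite !mxE.
  by case: (z) => u v; case: (w i j) => p q.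
- rewrite -imM hw; apply/matrixP => i j; rewrite !mxE.
  by case: (z) => u v; case: (w i j) => p q /=; rewrite addrC.
rewrite -reM -imM; move: (w *m cmx Qh) => W r1 r2.
apply/matrixP => i j.
move/matrixP in r1; move/matrixP in r2; have := r1 i j; have := r2 i j.
rewrite !mxE; case: (W i j) => u v /= -> ->; by [].
Qed.

Lemma unstable_unbounded n (A Q Qh Pbar : 'M[R]_n) :
  psd Qh -> Qh *m Qh = Q -> stabilizable A Qh -> psd Pbar -> ~ stable A ->
  forall M : R, exists k, M <= \tr (iter k (lyap A Q) Pbar).
Proof.
move=> pQh hQ [L stL] pP nst M.
have qQ : forall u, qf Q u u = qf 1%:M (u *m Qh) (u *m Qh).
  by move=> u; rewrite -qf_cong mulmx1 (psd_sym pQh) hQ.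
have pQ : psd Q.
  by rewrite -hQ -{2}(psd_sym pQh) -{1}[Qh](mulmx1 Qh); apply: psd_cong; apply: psd1.
have [z [ez nz]] : exists z, eigenvalue (cmx A) z /\ ~ (`|z| < 1).
  apply: contrapT => H; apply: nst => z ez; apply: contrapT => nz; apply: H.
  by exists z.
have /eigenvalueP [w hw w0] := ez.
have [a [b [ha hb hab]]] := eig_real Qh hw.
have s1 : 1 <= complex.Re z ^+ 2 + complex.Im z ^+ 2.
  move: nz; rewrite normc_def -[1 : R[i]]/((1 : R)%:C)%C ltcR => nz.
  have s0 : 0 <= complex.Re z ^+ 2 + complex.Im z ^+ 2 by rewrite addr_ge0 ?sqr_ge0.
  have h1 : 1 <= Num.sqrt (complex.Re z ^+ 2 + complex.Im z ^+ 2).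
    by rewrite leNgt; apply/negP.
  rewrite -(sqr_sqrtr s0); nra.
move: ha hb s1; move: (complex.Re z) (complex.Im z) => x y ha hb s1.
pose qr (P : 'M[R]_n) := qf P a a + qf P b b.
have qrD : forall P1 P2, qr (P1 + P2) = qr P1 + qr P2.
  by move=> P1 P2; rewrite /qr !qfMD; ring.
have qrA : forall P, P^T = P -> qr (A *m P *m A^T) = (x ^+ 2 + y ^+ 2) * qr P.
  move=> P sP; rewrite /qr (qf_cong A P a a) (qf_cong A P b b) ha hb.
  exact: (qf_rot x y (qf_sym b a sP)).
have qr0 : forall P, psd P -> 0 <= qr P.
  by move=> P pP'; apply: addr_ge0; apply: psd_qf.
have wQ0 : w *m cmx Qh <> 0.
  move=> h; have : eigenvalue (cmx (A + Qh *m L)) z.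
    apply/eigenvalueP; exists w; last exact: w0.
    by rewrite cmxD cmxM mulmxDr mulmxA h mul0mx addr0.
  by move/stL.
have c_gt0 : 0 < qr Q.
  rewrite /qr !qQ.
  have [aq|aq] := eqVneq (a *m Qh) 0; last first.
    by apply: ltr_wpDr; [apply: psd_qf; apply: psd1 | apply: qf1_gt0].
  have [bq|bq] := eqVneq (b *m Qh) 0; last first.
    by apply: ltr_wpDl; [apply: psd_qf; apply: psd1 | apply: qf1_gt0].
  by exfalso; apply: wQ0; exact: hab aq bq.
pose s k := iter k (lyap A Q) Pbar.
have ps : forall k, psd (s k).
  elim => [|k IH]; first exact: pP.
  by rewrite /s iterS; apply: psd_lyap.
have grow : forall k, k%:R * qr Q <= qr (s k).
  elim => [|k IH]; first by rewrite mul0r; apply: qr0; apply: ps.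
  have -> : s k.+1 = A *m s k *m A^T + Q by rewrite /s iterS.
  rewrite qrD qrA; last exact: psd_sym (ps k).
  have := qr0 _ (ps k); rewrite -addn1 natrD mulrDl mul1r => h0; nra.
have [W [W0 bnd]] : exists W, 0 <= W /\ forall P, psd P -> qr P <= W * \tr P.
  exists ((\sum_i `|a 0 i|) ^+ 2 + (\sum_i `|b 0 i|) ^+ 2); split.
    by apply: addr_ge0; apply: sqr_ge0.
  by move=> P pP'; rewrite mulrDl; apply: lerD; apply: qf_bound.
have hW : 0 < W.
  rewrite lt_def W0 andbT; apply/eqP => W0'.
  have := bnd _ (ps 1%N); rewrite W0' mul0r.
  have := grow 1%N; rewrite mul1r => h1 h2.
  by have := lt_le_trans c_gt0 (le_trans h1 h2); rewrite ltxx.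
have hx : 0 <= W * `|M| / qr Q.
  by apply: divr_ge0; [apply: mulr_ge0 | apply: ltW].
have hk := Num.Theory.archi_boundP hx.
move: hk; move: (Num.Def.archi_bound _) => k hk.
exists k.
move: hk; rewrite ltr_pdivrMr; last exact: c_gt0.
move=> hk.
have h1 : W * M <= W * `|M| by apply: ler_wpM2l; [exact: W0 | exact: ler_norm].
have h2 := bnd _ (ps k); have h3 := grow k.
have h4 : W * M <= W * \tr (s k) := le_trans h1 (le_trans (ltW (lt_le_trans hk h3)) h2).
by rewrite (ler_pM2l hW) in h4.
Qed.
End Unst.

Section Main.
Variable R : realType.

Definition sq n (A Q Pbar : 'M[R]_n) k := iter k (lyap A Q) Pbar.

Lemma sqS n (A Q Pbar : 'M[R]_n) k : sq A Q Pbar k.+1 = lyap A Q (sq A Q Pbar k).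
Proof. by rewrite /sq iterS. Qed.

Lemma thr_main n m (A Q Qh Pbar : 'M[R]_n) (C : 'M[R]_(m, n)) (Rv : 'M[R]_m)
  (lam E beta : R) (h : 'M[R]_n -> R) :
  psd Qh -> Qh *m Qh = Q -> pd Rv -> stabilizable A Qh ->
  psd Pbar -> kf_step A Q C Rv Pbar = Pbar ->
  0 < lam <= 1 -> 0 <= E -> 0 < beta < 1 ->
  (forall P P', inS A Q Pbar P -> inS A Q Pbar P' -> loew_le P P' -> h P <= h P') ->
  exists T : option 'M[R]_n,
    threshold_rule A Q Pbar (cost0 A Q beta h) (cost1 A Q Pbar lam E beta h) T.
Proof.
move=> pQh hQ pR stab pP kf /andP [l0 l1] E0 /andP [b0 b1] hmono.
have pQ : psd Q.
  by rewrite -hQ -{2}(psd_sym pQh) -{1}[Qh](mulmx1 Qh); apply: psd_cong; apply: psd1.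
have ps : forall k, psd (sq A Q Pbar k).
  elim => [|k IH]; first exact: pP.
  by rewrite sqS; apply: psd_lyap.
have step : forall k, loew_le (sq A Q Pbar k) (sq A Q Pbar k.+1).
  elim => [|k IH]; first exact: (kf_le pQ pR pP kf).
  by rewrite (sqS _ _ _ k.+1) (sqS _ _ _ k); apply: lyap_mono.
have chain : forall i d, loew_le (sq A Q Pbar i) (sq A Q Pbar (i + d)).
  move=> i; elim => [|d IH]; first by rewrite addn0; apply: loew_refl.
  by rewrite addnS; apply: (loew_trans IH).
have chain' : forall i j, (i <= j)%N -> loew_le (sq A Q Pbar i) (sq A Q Pbar j).
  by move=> i j hij; rewrite -(subnKC hij); apply: chain.
have inSf : forall P, inS A Q Pbar P -> inS A Q Pbar (lyap A Q P).
  by move=> P [k ->]; exists k.+1; rewrite iterS.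
have gmono : forall P P', inS A Q Pbar P -> inS A Q Pbar P' -> loew_le P P' ->
    cost1 A Q Pbar lam E beta h P' - cost0 A Q beta h P' <=
    cost1 A Q Pbar lam E beta h P - cost0 A Q beta h P.
  move=> P P' hP hP' le.
  have t := loew_tr (lyap_mono A Q le).
  have hh := hmono _ _ (inSf _ hP) (inSf _ hP') (lyap_mono A Q le).
  rewrite /cost0 /cost1.
  have bl : 0 <= beta * lam by rewrite mulr_ge0 // ltW.
  have k1 := ler_wpM2l bl t; have k2 := ler_wpM2l (ltW l0) hh.
  lra.
have [ex|nex] := pselect (exists k, cost1 A Q Pbar lam E beta h (sq A Q Pbar k)
                              <= cost0 A Q beta h (sq A Q Pbar k)).
  case: (ex_minnP ex) => k0 hk0 kmin.
  exists (Some (sq A Q Pbar k0)); split; first by exists k0.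
  move=> P [i ->]; split.
    move=> [hle hne].
    have [lt_ik|le_ki] := ltnP i k0.
      rewrite leNgt; apply/negP => hlt.
      have := kmin i (ltW hlt); rewrite leqNgt lt_ik //.
    exfalso; apply: hne; apply: loew_antisym => //; exact: chain'.
  move=> hle.
  have := gmono _ _ (ex_intro _ k0 erefl) (ex_intro _ i erefl) hle.
  move: hk0; rewrite -subr_le0 => hk0 hg.
  by rewrite -subr_le0; apply: (le_trans hg).
exists None; split; last first.
  move=> P [k ->]; rewrite leNgt; apply/negP => hlt; apply: nex.
  by exists k; apply: ltW.
apply: contrapT => nst.
pose D := (1 - beta) * E / (beta * lam).
have bl : 0 < beta * lam by rewrite mulr_gt0.
have hD : beta * lam * D = (1 - beta) * E.
  by rewrite /D mulrC divfK // lt0r_neq0.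
have [k hk] := unstable_unbounded pQh hQ stab pP nst (\tr Pbar + D + 1).
apply: nex; exists k.
have t1 : \tr (sq A Q Pbar k) <= \tr (lyap A Q (sq A Q Pbar k)).
  by rewrite -sqS; apply: loew_tr; apply: step.
have hh : h Pbar <= h (lyap A Q (sq A Q Pbar k)).
  apply: hmono; first by exists 0%N.
    by exists k.+1; rewrite iterS.
  by rewrite -sqS; apply: (chain' 0%N).
rewrite /cost0 /cost1 -subr_ge0.
have k1 := ler_wpM2l (ltW bl) (le_trans hk t1).
have k2 := ler_wpM2l (ltW l0) hh.
rewrite mulrDr mulrDr hD mulr1 in k1.
lra.
Qed.
End Main.

Section Final.
Variable R : realType.

Lemma bellman_mono n (A Q Pbar : 'M[R]_n) (lam E beta : R) (h : 'M[R]_n -> R) :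
  0 <= lam <= 1 -> 0 <= beta ->
  (forall P P', loew_le P P' -> h P <= h P') ->
  forall P P', loew_le P P' ->
    bellman A Q Pbar lam E beta h P <= bellman A Q Pbar lam E beta h P'.
Proof.
move=> /andP [l0 l1] b0 hm P P' le.
have t := loew_tr (lyap_mono A Q le).
have hh := hm _ _ (lyap_mono A Q le).
have c0 : cost0 A Q beta h P <= cost0 A Q beta h P'.
  by rewrite /cost0; apply: lerD => //; apply: ler_wpM2l.
have c1 : cost1 A Q Pbar lam E beta h P <= cost1 A Q Pbar lam E beta h P'.
  rewrite /cost1.
  have l1' : 0 <= 1 - lam by rewrite subr_ge0.
  have k1 := ler_wpM2l (mulr_ge0 b0 l1') t.
  have k2 := ler_wpM2l l1' hh.
  lra.
rewrite /bellman le_min !ge_min.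
by rewrite c0 c1 orbT.
Qed.

End Final.

Unset Implicit Arguments.
Local Open Scope classical_set_scope.
Local Open Scope ring_scope.
Theorem theorem4 (R : realType) (n m : nat)
  (A Q Qh : 'M[R]_n) (C : 'M[R]_(m, n)) (Rv : 'M[R]_m) (Pbar : 'M[R]_n)
  (lam E beta : R) :
  psd Qh -> Qh *m Qh = Q -> pd Rv ->
  detectable A C -> stabilizable A Qh ->
  psd Pbar -> kf_step A Q C Rv Pbar = Pbar ->
  0 < lam <= 1 -> 0 <= E -> 0 < beta < 1 ->
  (* (i) finite horizon *)
  (forall K k : nat, (1 <= K)%N -> (1 <= k <= K)%N ->
     exists T : option 'M[R]_n,
       threshold_rule A Q Pbar
         (cost0 A Q beta (Jfin A Q Pbar lam E beta K k.+1))
         (cost1 A Q Pbar lam E beta (Jfin A Q Pbar lam E beta K k.+1)) T)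
  /\
  (* (ii) infinite horizon, (rho, h) the limit of relative value iteration *)
  (forall (s0 : 'M[R]_n) (rho : R) (h : 'M[R]_n -> R),
     inS A Q Pbar s0 ->
     (forall P, inS A Q Pbar P ->
        (fun j => rvi A Q Pbar lam E beta s0 j P) @ \oo --> h P) ->
     (forall P, inS A Q Pbar P ->
        rho + h P = bellman A Q Pbar lam E beta h P) ->
     exists T : option 'M[R]_n,
       threshold_rule A Q Pbar (cost0 A Q beta h)
         (cost1 A Q Pbar lam E beta h) T).
Proof.
move=> pQh hQ pR dt stab pP kf hl hE hb.
have lam01 : 0 <= lam <= 1 by case/andP: hl => l0 l1; rewrite ltW.
have b0 : 0 <= beta by case/andP: hb => b0 _; apply: ltW.
split.
  move=> K k _ _.
  apply: (thr_main pQh hQ pR stab pP kf hl hE hb).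
  move=> P P' _ _; rewrite /Jfin; move: (K.+1 - k.+1)%N => j.
  elim: j P P' => [|j IH] P P' le; first exact: lexx.
  rewrite !iterS; apply: bellman_mono; [exact: lam01 | exact: b0 | exact: IH | exact: le].
move=> s0 rho h _ hcv _.
apply: (thr_main pQh hQ pR stab pP kf hl hE hb).
have rm : forall j P P', loew_le P P' ->
    rvi A Q Pbar lam E beta s0 j P <= rvi A Q Pbar lam E beta s0 j P'.
  elim => [|j IH] P P' le; first exact: lexx.
  rewrite /=; apply: lerB; last exact: lexx.
  apply: bellman_mono; [exact: lam01 | exact: b0 | exact: IH | exact: le].
move=> P P' hP hP' le.
apply: (ler_cvg_to (hcv _ hP) (hcv _ hP')).
by apply: nearW => j; apply: rm.
Qed.
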